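(* Let $q$ be a prime power, $b$ a positive integer, and $\boldsymbol{B}$ an $M\times M$ matrix with nonnegative integer entries. Then \[ N_b(\boldsymbol{B})\ge\begin{cases}\dfrac{2q^b}{(q^b-1)M^2}\sum_{i<j}[\boldsymbol{B}]_{ij}, & \text{if } M\equiv 0\pmod{q^b},\\[2mm] \dfrac{2q^b}{(q^b-1)(M^2-1)}\sum_{i<j}[\boldsymbol{B}]_{ij}, & \text{if } M\equiv 1\pmod{q^b},\\[2mm] \dfrac{2q^b}{M^2(q^b-1)-m(q^b-m)}\sum_{i<j}[\boldsymbol{B}]_{ij}, & \text{if } M\equiv m\pmod{q^b},\ m>1.\end{cases} \]
   Context: For $\boldsymbol{z}=(z_0,\ldots,z_{n-1}),\boldsymbol{w}\in\mathbb{F}_q^n$, the $b$-symbol distance $d_b(\boldsymbol{z},\boldsymbol{w})$ is the number of $i\in\{0,\ldots,n-1\}$ with $(z_i,\ldots,z_{i+b-1})\ne(w_i,\ldots,w_{i+b-1})$ (indices mod $n$). $N_b(\boldsymbol{B})$ is the smallest $r$ such that there exist $\boldsymbol{p}_1,\ldots,\boldsymbol{p}_M\in\mathbb{F}_q^r$ (in some ordering) with $d_b(\boldsymbol{p}_i,\boldsymbol{p}_j)\ge[\boldsymbol{B}]_{ij}$ for all $i,j$. In the third case $m$ denotes the residue of $M$ modulo $q^b$, with $1<m<q^b$. *)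

(* Defs.v *)
From HB Require Import structures.
From mathcomp Require Import all_boot all_order all_algebra all_field.
From Stdlib Require Import ClassicalEpsilon.
Set Implicit Arguments. Unset Strict Implicit. Unset Printing Implicit Defensive.
Import GRing.Theory Num.Theory.

(* Vectors of F_q^r are r.-tuples over a finite field F (q = #|F|),
   coordinates indexed 0..r-1, indices taken modulo r. *)

Definition bdist (F : finFieldType) (b r : nat) (z w : r.-tuple F) : nat :=
  #|[set i : 'I_r | [exists k : 'I_b,
      nth 0%R z ((i + k) %% r) != nth 0%R w ((i + k) %% r)]]|.

Definition Nb_feasible (F : finFieldType) (b M : nat) (B : 'M[nat]_M) (r : nat) : bool :=
  [exists p : {ffun 'I_M -> r.-tuple F},
     [forall i : 'I_M, forall j : 'I_M, (i != j) ==> (B i j <= bdist b (p i) (p j))%N]].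

(* N_b(B): the smallest feasible length r (0 by convention if none exists,
   which never happens for b >= 1). *)
Definition Nb (F : finFieldType) (b M : nat) (B : 'M[nat]_M) : nat :=
  match excluded_middle_informative (exists r, Nb_feasible F b B r) with
  | left h => ex_minn h
  | right _ => 0%N
  end.

Definition upper_sum (M : nat) (B : 'M[nat]_M) : nat :=
  (\sum_(i < M) \sum_(j < M | (i < j)%N) B i j)%N.

Local Open Scope ring_scope.
Definition Nb_bound (q b M : nat) (B : 'M[nat]_M) : rat :=
  let Q : rat := (q ^ b)%N%:R in
  let m : nat := (M %% q ^ b)%N in
  let S : rat := (upper_sum B)%:R in
  let M2 : rat := (M ^ 2)%N%:R in
  if m == 0%N then 2 * Q / ((Q - 1) * M2) * S
  else if m == 1%N then 2 * Q / ((Q - 1) * (M2 - 1)) * S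
  else 2 * Q / (M2 * (Q - 1) - m%:R * (Q - m%:R)) * S.

(* Main.v *)
Require Import Defs.
From HB Require Import structures.
From mathcomp Require Import all_boot all_order all_algebra all_field.
From mathcomp Require Import zify ring lra.
From Stdlib Require Import ClassicalEpsilon.
Import Order.TTheory GRing.Theory Num.Theory.
Lemma sum_pick (T : finType) (x : T) (g : T -> nat) :
  (\sum_(c : T) (c == x) * g c = g x)%N.
Proof.
rewrite (bigD1 x) //= eqxx mul1n big1 ?addn0 // => c /negbTE ->; by rewrite mul0n.
Qed.

Lemma sq_bound (T : finType) M (f : 'I_M -> T) :
  (M*M + (M %% #|T|)*(#|T| - M %% #|T|) <= #|T| * \sum_i \sum_j (f i == f j))%N.
Proof.
set Q := #|T|.
pose n c := (\sum_j (c == f j) : nat)%N.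
have E1 : (\sum_i \sum_j (f i == f j) = \sum_c n c * n c)%N.
  transitivity (\sum_i n (f i))%N; first by [].
  transitivity (\sum_i \sum_c (c == f i) * n c)%N.
    by apply: eq_bigr => i _; rewrite sum_pick.
  rewrite exchange_big /=; apply: eq_bigr => c _.
  by rewrite -big_distrl /= mulnC.
have E2 : (\sum_c n c = M)%N.
  rewrite /n exchange_big /=.
  transitivity (\sum_(j < M) 1)%N; last by rewrite sum_nat_const card_ord muln1.
  apply: eq_bigr => j _. by rewrite -(@sum_pick _ (f j) (fun _ => 1%N)); apply: eq_bigr => c _; rewrite muln1.
rewrite E1.
have [M0|Mpos] := posnP M.
  by rewrite M0 mod0n.
have Qpos : (0 < Q)%N by apply/card_gt0P; exists (f (Ordinal Mpos)).
set a := (M %/ Q)%N.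
have H1 : forall c, ((2*a+1) * n c <= n c * n c + a*(a+1))%N.
  move=> c. case: (leqP (n c) a) => h.
  nia. nia.
have H2 : ((2*a+1) * M <= \sum_c n c * n c + Q * (a*(a+1)))%N.
  rewrite -E2 big_distrr /=.
  have -> : (Q * (a*(a+1)) = \sum_(c : T) a*(a+1))%N by rewrite sum_nat_const.
  rewrite -big_split /=; apply: leq_sum => c _; exact: H1.
have HM : M = (a * Q + M %% Q)%N by rewrite /a -divn_eq.
have Hm : (M %% Q < Q)%N by rewrite ltn_mod.
move: H2 Hm HM. set X := (\sum_c _)%N. set m := (M %% Q)%N.
move=> H2 Hm HM.
have H3 := leq_mul (leqnn Q) H2.
have [k Qk] : exists k, Q = (m + k)%N by exists (Q - m)%N; lia.
rewrite Qk addKn.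
rewrite HM Qk in H3 *.
have EQ : ((m+k) * ((2*a+1) * (a*(m+k) + m)) = (a*(m+k)+m)*(a*(m+k)+m) + m*k + (m+k)*((m+k)*(a*(a+1))))%N.
  ring.
rewrite EQ in H3.
lia.
Qed.
Lemma sym_sum M (g : 'I_M -> 'I_M -> nat) :
  (forall i j, g i j = g j i) -> (forall i, g i i = 0%N) ->
  (\sum_(i < M) \sum_(j < M) g i j = 2 * \sum_(i < M) \sum_(j < M | (i < j)%N) g i j)%N.
Proof.
move=> gs g0.
have E : forall i j, g i j = ((if (i < j)%N then g i j else 0) + (if (j < i)%N then g j i else 0))%N.
  move=> i j; case: (ltngtP i j) => h.
  - by rewrite addn0.
  - by rewrite add0n gs.
  - have -> : i = j by apply: val_inj. by rewrite g0.
under eq_bigr => i _ do under eq_bigr => j _ do rewrite E.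
under eq_bigr => i _ do rewrite big_split /=.
rewrite big_split /= [X in (_ + X)%N]exchange_big /= mul2n -addnn.
have H : (\sum_(i < M) \sum_(j < M | (i < j)%N) g i j = \sum_(i < M) \sum_(j < M) (if (i < j)%N then g i j else 0))%N.
  by apply: eq_bigr => i _; rewrite big_mkcond.
by rewrite H.
Qed.
Definition win (F : finFieldType) (b r : nat) (t : 'I_r) (z : r.-tuple F) : {ffun 'I_b -> F} :=
  [ffun k : 'I_b => nth 0%R z ((t + k) %% r)].

Arguments win {F} b {r} t z.

Lemma bdist_sum (F : finFieldType) b r (z w : r.-tuple F) :
  bdist b z w = (\sum_(t < r) (win b t z != win b t w))%N.
Proof.
rewrite /bdist -sum1_card big_mkcond /=; apply: eq_bigr => t _.
rewrite inE.
have -> : [exists k : 'I_b, nth 0%R z ((t + k) %% r) != nth 0%R w ((t + k) %% r)]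
   = (win b t z != win b t w).
  apply/idP/idP.
  - case/existsP => k Hk; apply: contra Hk => /eqP /ffunP /(_ k).
    by rewrite !ffunE => ->.
  - move=> Hne; case: existsP => // Hn; exfalso.
    move/negP: Hne; apply; apply/eqP/ffunP => k; rewrite !ffunE.
    by apply/eqP/negPn/negP => hk; apply: Hn; exists k.
by case: (_ != _).
Qed.

Lemma feas (F : finFieldType) b M (B : 'M[nat]_M) : (0 < b)%N -> exists r, Nb_feasible F b B r.
Proof.
move=> b0.
set K := (\max_(ij : 'I_M * 'I_M) B ij.1 ij.2).+1.
have BK : forall i j, (B i j < K)%N.
  move=> i j; rewrite /K ltnS; exact: (@leq_bigmax _ (fun ij : 'I_M * 'I_M => B ij.1 ij.2) (i, j)).
exists (M * K)%N.
apply/existsP.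
exists [ffun i : 'I_M => [tuple (if ((i * K <= t) && (t < i * K + K))%N then 1%R else 0%R : F) | t < M * K]].
apply/forallP => i; apply/forallP => j; apply/implyP => ij.
rewrite !ffunE.
apply: (leq_trans (ltnW (BK i j))).
have iK : forall k : 'I_K, (i * K + k < M * K)%N.
  move=> k; have := ltn_ord i; have := ltn_ord k; nia.
pose g (k : 'I_K) : 'I_(M * K) := Ordinal (iK k).
have ginj : injective g by move=> k1 k2 /(congr1 val) /= /addnI /val_inj.
have Hc : #|[set g k | k in 'I_K]| = K by rewrite card_imset // card_ord.
rewrite -[X in (X <= _)%N]Hc.
apply: subset_leq_card; apply/subsetP => t /imsetP [k _ ->].
rewrite inE; apply/existsP; exists (Ordinal b0).
rewrite /= addn0 modn_small ?ltn_ord //.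
have -> : (i * K + k)%N = (g k : nat) by [].
rewrite !nth_mktuple /=.
have h1 : ((i * K <= i * K + k) && (i * K + k < i * K + K))%N.
  have := ltn_ord k; lia.
have h2 : ~~ ((j * K <= i * K + k) && (i * K + k < j * K + K))%N.
  have := ltn_ord k; have : (val i != val j) by [].
  case: (ltngtP i j) => // h _ hk.
  - apply/negP => /andP [h3 _]. 
    have : (i.+1 * K <= j * K)%N by rewrite leq_mul2r h orbT.
    rewrite mulSn; lia.
  - apply/negP => /andP [_ h3].
    have : (j.+1 * K <= i * K)%N by rewrite leq_mul2r h orbT.
    rewrite mulSn; lia.
rewrite h1 (negbTE h2); exact: oner_neq0.
Qed.

Lemma key_ineq (F : finFieldType) (b M : nat) (B : 'M[nat]_M) r (p : {ffun 'I_M -> r.-tuple F}) :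
  [forall i : 'I_M, forall j : 'I_M, (i != j) ==> (B i j <= bdist b (p i) (p j))%N] ->
  (2 * (#|F| ^ b) * upper_sum B + r * (M*M + (M %% (#|F| ^ b))*((#|F| ^ b)-(M %% (#|F| ^ b)))) <= r * ((#|F| ^ b) * (M*M)))%N.
Proof.
move=> Hp. set Q := (#|F| ^ b)%N. set m := (M %% Q)%N.
pose d i j := bdist b (p i) (p j).
have HS : (upper_sum B <= \sum_(i < M) \sum_(j < M | (i < j)%N) d i j)%N.
  apply: leq_sum => i _; apply: leq_sum => j ij.
  have nij : i != j by apply/eqP => E; move: ij; rewrite E ltnn.
  by move/forallP: Hp => /(_ i) /forallP /(_ j) /implyP /(_ nij).
have Hsym := @sym_sum M d.
have HS2 : (2 * upper_sum B <= \sum_(i < M) \sum_(j < M) d i j)%N.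
  rewrite Hsym; first by rewrite leq_mul2l HS orbT.
  - by move=> i j; rewrite /d !bdist_sum; apply: eq_bigr => t _; rewrite eq_sym.
  - by move=> i; rewrite /d bdist_sum big1 // => t _; rewrite eqxx.
pose X (t : 'I_r) := (\sum_(i < M) \sum_(j < M) (win b t (p i) != win b t (p j)) : nat)%N.
have HT : (\sum_(i < M) \sum_(j < M) d i j = \sum_(t < r) X t)%N.
  transitivity (\sum_(i < M) \sum_(j < M) \sum_(t < r) (win b t (p i) != win b t (p j)) : nat)%N.
    by apply: eq_bigr => i _; apply: eq_bigr => j _; rewrite /d bdist_sum.
  transitivity (\sum_(i < M) \sum_(t < r) \sum_(j < M) (win b t (p i) != win b t (p j)) : nat)%N.
    by apply: eq_bigr => i _; rewrite exchange_big.
  by rewrite exchange_big.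
have cardT : #|{ffun 'I_b -> F}| = Q by rewrite card_ffun card_ord.
have Ht : forall t, (Q * X t + (M*M + m*(Q-m)) <= Q*(M*M))%N.
  move=> t.
  have := @sq_bound _ _ (fun i => win b t (p i)); rewrite cardT -/m.
  have Hsum : (X t + \sum_(i < M) \sum_(j < M) (win b t (p i) == win b t (p j)) = M * M)%N.
    rewrite /X -big_split /=.
    transitivity (\sum_(i < M) \sum_(j < M) 1)%N.
      apply: eq_bigr => i _; rewrite -big_split /=; apply: eq_bigr => j _.
      by case: (_ == _).
    by rewrite sum_nat_const card_ord sum_nat_const card_ord muln1.
  move: Hsum; set Y := (\sum_(i < M) _)%N; set Z := X t => Hsum H.
  rewrite -Hsum mulnDr; lia.
have Hall : (\sum_(t < r) (Q * X t + (M*M + m*(Q-m))) <= \sum_(t < r) Q*(M*M))%N.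
  by apply: leq_sum => t _; exact: Ht.
rewrite big_split /= -big_distrr /= !sum_nat_const card_ord -HT in Hall.
have := leq_mul (leqnn Q) HS2.
lia.
Qed.

Theorem lemma4p1 (F : finFieldType) (b M : nat) (B : 'M[nat]_M) :
  (0 < b)%N ->
  (Nb_bound #|F| b B <= (Nb F b B)%:R)%R.
Proof.
move=> b0.
rewrite /Nb; case: excluded_middle_informative => [h|hn]; last first.
  by exfalso; apply: hn; exact: feas.
case: ex_minnP => r Hr _.
move/existsP: Hr => [p Hp].
have key := @key_ineq _ _ _ _ _ _ Hp.
move: key.
set Qn := (#|F| ^ b)%N.
set mn := (M %% Qn)%N.
set S := upper_sum B.
move=> key.
have Qpos : (0 < Qn)%N by rewrite expn_gt0; apply/orP; left; apply/card_gt0P; exists 0%R.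
have mQ : (mn <= Qn)%N by apply: ltnW; rewrite ltn_mod.
set D : rat := ((M ^ 2)%N%:R * (Qn%:R - 1) - mn%:R * (Qn%:R - mn%:R))%R.
have Hb : Nb_bound #|F| b B = (2 * Qn%:R / D * S%:R)%R.
  rewrite /Nb_bound -/Qn -/mn -/S /D.
  case: eqP => [->|_]; first by congr (_ * _^-1 * _)%R; ring.
  case: eqP => [->|_]; first by congr (_ * _^-1 * _)%R; ring.
  by [].
rewrite Hb.
have keyR : (2 * Qn%:R * S%:R + r%:R * ((M^2)%N%:R + mn%:R * (Qn%:R - mn%:R))
   <= r%:R * (Qn%:R * (M^2)%N%:R) :> rat)%R.
  move: key; rewrite -(ler_nat rat) !(natrD, natrM, natrB _ mQ) ?expn2 ?natrM.
  by [].
case: (ltrP 0 D) => hD.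
  rewrite mulrAC ler_pdivrMr //.
  rewrite /D; lra.
have H0 : (2 * Qn%:R / D * S%:R <= 0 :> rat)%R.
  apply: mulr_le0_ge0; last exact: ler0n.
  apply: mulr_ge0_le0; first by apply: mulr_ge0 => //; exact: ler0n.
  by rewrite invr_le0.
exact: le_trans H0 (ler0n _ _).
Qed.
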